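(* Let $F\in\mathbb{C}[x]$ be a polynomial of degree $n\ge 2$, and let $\Delta$ be a disk in $\mathbb{C}$ that is $(\frac{1}{16n},16n^4)$-isolating for a set of $k$ roots of $F$ (counted with multiplicity). Then $T_k(\Delta,\frac32,F)$ holds.
   Context: $\Delta(m,r)$ denotes the open disk with center $m$ and radius $r>0$, and $\lambda\cdot\Delta(m,r):=\Delta(m,\lambda r)$. For $0<\rho_1\le 1\le\rho_2$ and a set $S$ of roots of $F$ (counted with multiplicity), a disk $\Delta$ is $(\rho_1,\rho_2)$-isolating for $S$ if $\rho_1\cdot\Delta$ contains exactly the roots in $S$ (with multiplicity) and $\rho_2\cdot\Delta\setminus\rho_1\cdot\Delta$ contains no root of $F$. The predicate $T_k(\Delta(m,r),K,F)$ holds iff $\left|\frac{F^{(k)}(m) r^k}{k!}\right|>K\sum_{i\neq k,\,0\le i\le n}\left|\frac{F^{(i)}(m)r^i}{i!}\right|$. *)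

(* Defs.v *)
(* Complex numbers are modelled by an arbitrary
   numClosedFieldType C (algebraically closed field with a norm). *)
From HB Require Import structures.
From mathcomp Require Import all_boot all_order all_algebra.
Set Implicit Arguments. Unset Strict Implicit. Unset Printing Implicit Defensive.
Import Order.TTheory GRing.Theory Num.Theory.
Local Open Scope ring_scope.

Definition in_disk (C : numClosedFieldType) (m : C) (r : C) (z : C) : bool :=
  `|z - m| < r.

(* Delta(m,r) is (rho1,rho2)-isolating for a set of k roots of F
   (counted with multiplicity): writing F = lc(F) * prod_(z <- rs) (X - z),
   exactly k elements of rs (with multiplicity) lie in rho1*Delta, and no
   root lies in rho2*Delta \ rho1*Delta. *)
Definition isolating (C : numClosedFieldType) (F : {poly C}) (k : nat)
    (m r rho1 rho2 : C) : Prop :=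
  exists rs : seq C,
    F = lead_coef F *: \prod_(z <- rs) ('X - z%:P) /\
    count (in_disk m (rho1 * r)) rs = k /\
    (forall z, z \in rs -> ~~ in_disk m (rho1 * r) z ->
                ~~ in_disk m (rho2 * r) z).

Definition Tk (C : numClosedFieldType) (k : nat) (m r K : C) (F : {poly C})
  : Prop :=
  `| (F^`(k)).[m] * r ^+ k / (k`!)%:R |>
    K * \sum_(i < (size F).-1.+1 | i != k :> nat)
          `| (F^`(i)).[m] * r ^+ i / (i`!)%:R |.

(* Main.v *)
Require Import Defs.
From HB Require Import structures.
From mathcomp Require Import all_boot all_order all_algebra.
From mathcomp Require Import ring.
Import Order.TTheory GRing.Theory Num.Theory.
Local Open Scope ring_scope.
Set Implicit Arguments. Unset Strict Implicit. Unset Printing Implicit Defensive.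

Definition Nr (C : numClosedFieldType) (N : nat) (r : C) (p : {poly C}) : C :=
  \sum_(i < N) `|p`_i| * r ^+ i.
Arguments Nr {C}.

Lemma Nr_ge0 (C : numClosedFieldType) N (r : C) p : 0 <= r -> 0 <= Nr N r p.
Proof. by move=> hr; apply: sumr_ge0 => i _; rewrite mulr_ge0 ?exprn_ge0. Qed.

Lemma NrD (C : numClosedFieldType) N (r : C) p q : 0 <= r ->
  Nr N r (p + q) <= Nr N r p + Nr N r q.
Proof.
move=> hr; rewrite /Nr -big_split /=; apply: ler_sum => i _.
by rewrite coefD -mulrDl ler_wpM2r ?exprn_ge0 ?ler_normD.
Qed.

Lemma NrZ (C : numClosedFieldType) N (r : C) a p :
  Nr N r (a *: p) = `|a| * Nr N r p.
Proof.
by rewrite /Nr mulr_sumr; apply: eq_bigr => i _; rewrite coefZ normrM mulrA.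
Qed.

Lemma NrN (C : numClosedFieldType) N (r : C) p : Nr N r (- p) = Nr N r p.
Proof. by apply: eq_bigr => i _; rewrite coefN normrN. Qed.

Lemma NrB (C : numClosedFieldType) N (r : C) p q : 0 <= r ->
  Nr N r (p - q) <= Nr N r p + Nr N r q.
Proof. by move=> hr; rewrite -(@NrN _ N r q) NrD. Qed.

Lemma NrXM (C : numClosedFieldType) N (r : C) p : 0 <= r ->
  Nr N r ('X * p) <= r * Nr N r p.
Proof.
move=> hr; case: N => [|N]; first by rewrite /Nr !big_ord0 mulr0.
rewrite /Nr big_ord_recl coefXM eqxx normr0 mul0r add0r.
apply: (@le_trans _ _ (r * \sum_(i < N) `|p`_i| * r ^+ i)).
  rewrite mulr_sumr le_eqVlt; apply/orP; left; apply/eqP.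
  by apply: eq_bigr => i _; rewrite lift0 coefXM /= exprS mulrCA.
rewrite ler_wpM2l // big_ord_recr /= lerDl.
by rewrite mulr_ge0 ?exprn_ge0.
Qed.

Lemma NrXn (C : numClosedFieldType) N (r : C) j : 0 <= r ->
  Nr N r ('X^j) <= r ^+ j.
Proof.
move=> hr; elim: j => [|j IH].
  rewrite expr0; case: N => [|N]; first by rewrite /Nr big_ord0 ler01.
  rewrite /Nr big_ord_recl coef1 eqxx normr1 mul1r expr0 big1 ?addr0 //.
  by move=> i _; rewrite lift0 coef1 /= normr0 mul0r.
rewrite exprS; apply: le_trans (@NrXM _ N r _ hr) _.
by rewrite exprS ler_wpM2l.
Qed.

Lemma taylor_coef (C : numClosedFieldType) (F : {poly C}) (m : C) i :
  (F^`(i)).[m] / (i`!)%:R = (F \Po ('X + m%:P))`_i.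
Proof.
have hd : forall j, (F \Po ('X + m%:P))^`(j) = F^`(j) \Po ('X + m%:P).
  elim=> [|j IH] //; rewrite !derivnS IH deriv_comp derivD derivX derivC.
  by rewrite addr0 mulr1.
have -> : (F^`(i)).[m] = ((F \Po ('X + m%:P))^`(i)).[0].
  by rewrite hd horner_comp hornerD hornerX hornerC add0r.
rewrite horner_coef0 coef_derivn addn0 ffactnn -[_ *+ i`!]mulr_natr mulfK //.
by rewrite pnatr_eq0 -lt0n fact_gt0.
Qed.

Lemma main_ind (C : numClosedFieldType) (m r d : C) (N : nat) (rs : seq C) :
  0 < r -> 0 <= d ->
  (forall z, z \in rs -> in_disk m (d * r) z \/ r <= d * `|z - m|) ->
  exists c : C, exists R : {poly C}, c != 0 /\
    (\prod_(z <- rs) ('X - z%:P)) \Po ('X + m%:P) =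
      c *: ('X^(count (in_disk m (d * r)) rs) + R) /\
    Nr N r R <= ((1 + d) ^+ (size rs) - 1) * r ^+ (count (in_disk m (d * r)) rs).
Proof.
move=> hr0 hd; have hr := ltW hr0.
elim: rs => [|z rs IH] hyp.
  exists 1, 0; split; first exact: oner_neq0.
  rewrite big_nil -polyC1 comp_polyC polyC1 scale1r expr0 addr0; split=> //.
  by rewrite /Nr big1 ?expr0 ?subrr ?mul0r // => i _; rewrite coef0 normr0 mul0r.
have [|c [R [hc [hT hR]]]] := IH.
  by move=> y hy; apply: hyp; rewrite in_cons hy orbT.
set j := count _ rs in hT hR; set s := size rs in hR.
set rho := (1 + d) ^+ s - 1 in hR.
have hrho : 0 <= rho by rewrite subr_ge0 exprn_ege1 // lerDl.
have hNR := Nr_ge0 N R hr.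
have hcomp : (\prod_(y <- z :: rs) ('X - y%:P)) \Po ('X + m%:P) =
    ('X + m%:P - z%:P) * (c *: ('X^j + R)).
  by rewrite big_cons comp_polyM comp_polyB comp_polyX comp_polyC hT.
rewrite hcomp /=.
have [hz | hz] := boolP (in_disk m (d * r) z).
  rewrite -/j -/s; change (true + j)%N with j.+1.
  have ha : `|z - m| < d * r by [].
  exists c, ('X * R - (z - m) *: 'X^j - (z - m) *: R); split=> //; split.
    rewrite -!mul_polyC polyCB exprS; ring.
  apply: le_trans (NrB _ _ _ hr) _.
  apply: le_trans (lerD (NrB _ _ _ hr) (lexx _)) _.
  rewrite !NrZ.
  apply: (@le_trans _ _ (r * (rho * r ^+ j) + d * r * r ^+ j + d * r * (rho * r ^+ j))).
    apply: lerD; first apply: lerD.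
    - by apply: le_trans (NrXM _ _ hr) _; rewrite ler_wpM2l.
    - by apply: ler_pM => //; [exact: Nr_ge0 _ _ hr | exact: ltW | exact: NrXn].
    - by apply: ler_pM => //; exact: ltW.
  rewrite le_eqVlt; apply/orP; left; apply/eqP.
  by rewrite /rho !exprS; ring.
have hout : r <= d * `|z - m|.
  by case: (hyp z (mem_head _ _)) => // h; rewrite h in hz.
rewrite -/j -/s; change (false + j)%N with j.
have ha0 : z - m != 0.
  apply/eqP=> ha; move: hout; rewrite ha normr0 mulr0 => h.
  by move: (lt_le_trans hr0 h); rewrite ltxx.
have hna : 0 < `|z - m| by rewrite normr_gt0.
set b := (z - m)^-1.
have ht : `|b| * r <= d.
  by rewrite /b normrV ?unitfE // mulrC ler_pdivrMr.
have hb0 : 0 <= `|b| by [].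
exists (c * - (z - m)), (R - b *: 'X^(j.+1) - b *: ('X * R)); split.
  by rewrite mulf_neq0 // oppr_eq0.
split.
  have hab : (z%:P - m%:P) * b%:P = 1 by rewrite -polyCB -polyCM mulfV.
  rewrite -!mul_polyC polyCM polyCN polyCB.
  transitivity (c%:P * (- (z%:P - m%:P) * 'X^j - (z%:P - m%:P) * R +
     ((z%:P - m%:P) * b%:P) * ('X * 'X^j) + ((z%:P - m%:P) * b%:P) * ('X * R)));
    last by rewrite exprS; ring.
  by rewrite hab; ring.
apply: le_trans (NrB _ _ _ hr) _.
apply: le_trans (lerD (NrB _ _ _ hr) (lexx _)) _.
rewrite !NrZ.
apply: (@le_trans _ _ (rho * r ^+ j + d * r ^+ j + d * (rho * r ^+ j))).
  apply: lerD; first apply: lerD => //.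
  - apply: le_trans (ler_wpM2l hb0 (NrXn _ _ hr)) _.
    by rewrite exprS mulrA ler_wpM2r ?exprn_ge0.
  - apply: le_trans (ler_wpM2l hb0 (NrXM _ _ hr)) _.
    by rewrite [X in X <= _]mulrA ler_pM // mulr_ge0.
rewrite le_eqVlt; apply/orP; left; apply/eqP.
by rewrite /rho !exprS; ring.
Qed.

Lemma pow_bound (C : numClosedFieldType) (x : C) s : 0 <= x ->
  s%:R * x <= 1 / 16 -> (1 + x) ^+ s <= 1 + 2 * (s%:R * x).
Proof.
move=> hx; elim: s => [|s IH] hs.
  by rewrite expr0 mul0r mulr0 addr0.
have hs' : s%:R * x <= 1 / 16.
  by apply: le_trans hs; rewrite ler_wpM2r // ler_nat.
rewrite exprS mulrC; apply: le_trans (ler_wpM2r _ (IH hs')) _.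
  by rewrite addr_ge0.
rewrite -subr_ge0.
have -> : 1 + 2 * (s.+1%:R * x) - (1 + 2 * (s%:R * x)) * (1 + x) =
          x * (1 - 2 * (s%:R * x)) by rewrite mulrS; ring.
rewrite mulr_ge0 // subr_ge0; apply: le_trans (ler_wpM2l _ hs') _ => //.
rewrite -subr_ge0 (_ : 1 - 2 * (1 / 16) = 7 / 8 :> C); last by field.
by rewrite divr_ge0 // ler0n.
Qed.

Lemma final_ineq (C : numClosedFieldType) (e S A y a : C) : 0 < e -> 0 < y ->
  0 <= S -> 0 <= A -> S <= 2 * (1 / 16) * y -> A <= 2 * (1 / 16) * y ->
  y - A <= a -> 3 / 2 * (e * S) < e * a.
Proof.
move=> he hy hS hA hS1 hA1 ha.
rewrite mulrCA ltr_pM2l //; apply: lt_le_trans ha.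
rewrite -subr_gt0.
have -> : y - A - 3 / 2 * S = 11 / 16 * y +
    ((2 * (1 / 16) * y - A) + 3 / 2 * (2 * (1 / 16) * y - S)) by field.
apply: (@lt_le_trans _ _ (11 / 16 * y)).
  by rewrite mulr_gt0 // divr_gt0 // ltr0n.
rewrite lerDl addr_ge0 ?subr_ge0 // mulr_ge0 ?subr_ge0 //.
by rewrite divr_ge0 // ler0n.
Qed.

Theorem corollary3p3 (C : numClosedFieldType) (F : {poly C}) (n k : nat)
    (m r : C) :
  (2 <= n)%N -> size F = n.+1 -> 0 < r ->
  isolating F k m r (1 / (16 * n%:R)) (16 * n%:R ^+ 4) ->
  Tk k m r (3 / 2) F.
Proof.
move=> hn hsz hr0 [rs [hF [hcnt hout]]].
have hr := ltW hr0.
set d := 1 / (16 * n%:R) in hcnt hout.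
have hn0 : n%:R != 0 :> C by rewrite pnatr_eq0 -lt0n (leq_trans _ hn).
have hd : 0 <= d by rewrite divr_ge0 // mulr_ge0 // ler0n.
have hlc : lead_coef F != 0 by rewrite lead_coef_eq0 -size_poly_gt0 hsz.
have hsrs : size rs = n.
  by have := congr1 (fun p : {poly C} => size p) hF; rewrite /=; rewrite size_scale // size_prod_XsubC hsz => -[].
have hz : forall z, z \in rs -> in_disk m (d * r) z \/ r <= d * `|z - m|.
  move=> z hzr; case: (boolP (in_disk m (d * r) z)) => h; [by left | right].
  have := hout z hzr h; rewrite /in_disk => h2.
  have h3 : 16 * n%:R ^+ 4 * r <= `|z - m|.
    rewrite real_leNgt ?h2 ?normr_real // ger0_real // mulr_ge0 //.
    by rewrite mulr_ge0 ?exprn_ge0 ?ler0n.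
  apply: (@le_trans _ _ (n%:R ^+ 3 * r)).
    by rewrite ler_peMl // exprn_ege1 // ler1n (leq_trans _ hn).
  have -> : n%:R ^+ 3 * r = d * (16 * n%:R ^+ 4 * r) by rewrite /d; field.
  by rewrite ler_wpM2l.
have [c [R [hc [hT hR]]]] := @main_ind _ m r d n.+1 rs hr0 hd hz.
rewrite hcnt hsrs in hT hR.
have hk : (k < n.+1)%N by rewrite ltnS -hsrs -hcnt count_size.
rewrite /Tk hsz /=.
set T := F \Po ('X + m%:P).
set e := lead_coef F * c.
have hT' : T = e *: ('X^k + R) by rewrite /T {1}hF comp_polyZ hT scalerA.
have hterm : forall i, (F^`(i)).[m] * r ^+ i / (i`!)%:R =
    e * ((i == k)%:R + R`_i) * r ^+ i.
  by move=> i; rewrite mulrAC taylor_coef -/T hT' coefZ coefD coefXn.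
have he : 0 < `|e| by rewrite normr_gt0 mulf_neq0.
clearbody e.
rewrite hterm eqxx !normrM (ger0_norm (exprn_ge0 _ hr)).
under eq_bigr => i hi do
  rewrite hterm (negbTE hi) add0r !normrM (ger0_norm (exprn_ge0 _ hr)) -mulrA.
rewrite -mulr_sumr -mulrA.
set S := \sum_(i < n.+1 | _) _.
have hS : S <= Nr n.+1 r R.
  rewrite /Nr [X in _ <= X](bigID (fun i : 'I_n.+1 => i != k :> nat)) /=.
  by rewrite lerDl sumr_ge0 // => i _; rewrite mulr_ge0 ?exprn_ge0.
have hRk : `|R`_k| * r ^+ k <= Nr n.+1 r R.
  rewrite /Nr (bigD1 (Ordinal hk)) //= lerDl.
  by rewrite sumr_ge0 // => i _; rewrite mulr_ge0 ?exprn_ge0.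
have hnd : n%:R * d <= 1 / 16 by rewrite /d le_eqVlt; apply/orP; left; apply/eqP; field.
have hpow := pow_bound hd hnd.
have hNR : Nr n.+1 r R <= 2 * (1 / 16) * r ^+ k.
  apply: le_trans hR _; rewrite ler_wpM2r ?exprn_ge0 //.
  rewrite lerBlDl; apply: le_trans hpow _.
  by rewrite lerD2l ler_wpM2l // ?hnd.
apply: (@final_ineq _ `|e| S (`|R`_k| * r ^+ k) (r ^+ k)) => //.
- by rewrite exprn_gt0.
- by rewrite sumr_ge0 // => i _; rewrite mulr_ge0 ?exprn_ge0.
- by rewrite mulr_ge0 ?exprn_ge0.
- exact: le_trans hS hNR.
- exact: le_trans hRk hNR.
- have := lerB_normD 1 R`_k; rewrite normr1 => h.
  by rewrite -{1}(mul1r (r ^+ k)) -mulrBl ler_wpM2r ?exprn_ge0.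
Qed.
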